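(* Let $q\in\mathbb{C}\setminus\{0\}$ and $n\ge 1$. Then $G_{n+1}$ is spanned by elements of the form $a\chi b$ with $a,b\in G_n$ and $\chi\in\{1,\,t_n,\,v_{n+1},\,v_{n+1}t_n\}$. Moreover, $G_{n+1}[0]$ is spanned by elements of the form $a\chi b$ with $a,b\in G_n[0]$ and $\chi\in\{1,\,t_n,\,e_n,\,e_nt_n\}$, where $e_n=v_nv_{n+1}$.
   Context: For $q\in\mathbb{C}\setminus\{0\}$ the Hecke–Clifford algebra $G_n$ is the complex algebra generated by $t_1,\dots,t_{n-1}$ and $v_1,\dots,v_n$ subject to: the braid relations $t_jt_{j+1}t_j=t_{j+1}t_jt_{j+1}$, $t_it_j=t_jt_i$ for $|i-j|\ge2$; the quadratic relation $t_j-t_j^{-1}=q-q^{-1}$; the Clifford relations $v_jv_k+v_kv_j=2\delta_{jk}$; and the mixed relations $t_jv_j=v_{j+1}t_j$, $t_jv_{j+1}=v_jt_j-(q-q^{-1})(v_j-v_{j+1})$, $t_jv_l=v_lt_j$ for $l\neq j,j+1$. The map $v_j\mapsto -v_j$, $t_j\mapsto t_j$ defines an automorphism $\alpha$ of order two; $G_n[0]$ denotes its fixed-point subalgebra (the even part). $G_n$ is regarded as a subalgebra of $G_{n+1}$ via the obvious map on generators (and hence $G_n[0]\subset G_{n+1}[0]$). *)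

(* Defs.v *)
From HB Require Import structures.
From mathcomp Require Import all_boot all_order all_algebra.
From mathcomp Require Import reals.
From mathcomp Require Import complex.
Set Implicit Arguments. Unset Strict Implicit. Unset Printing Implicit Defensive.
Import Order.TTheory GRing.Theory Num.Theory.
Local Open Scope ring_scope.

Definition Cplx (R : realType) : fieldType := (R[i])%C.

Section HC.
Variables (K : pzRingType) (A : algType K).

Inductive gen_alg (S : A -> Prop) : A -> Prop :=
| gen_alg_gen x : S x -> gen_alg S x
| gen_alg_one : gen_alg S 1
| gen_alg_add x y : gen_alg S x -> gen_alg S y -> gen_alg S (x + y)
| gen_alg_scale (c : K) x : gen_alg S x -> gen_alg S (c *: x)
| gen_alg_mul x y : gen_alg S x -> gen_alg S y -> gen_alg S (x * y).

Inductive spanned (P : A -> Prop) : A -> Prop :=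
| spanned0 : spanned P 0
| spanned_comb (c : K) x y : P x -> spanned P y -> spanned P (c *: x + y).

Definition HC_gens (m : nat) (t v : nat -> A) (x : A) : Prop :=
  (exists2 j, (1 <= j < m)%N & x = t j) \/ (exists2 j, (1 <= j <= m)%N & x = v j).

(* The quadratic relation
   t - t^{-1} = q - q^{-1} is written in the equivalent form
   t^2 = (q - q^{-1}) t + 1 (which makes t invertible with
   t^{-1} = t - (q - q^{-1})). *)
Definition HC_relations (F : fieldType) (B : algType F) (m : nat) (q : F)
    (t v : nat -> B) : Prop :=
  (forall j, (1 <= j)%N -> (j.+1 < m)%N ->
         t j * t j.+1 * t j = t j.+1 * t j * t j.+1) /\
      (forall i j, (1 <= i < m)%N -> (1 <= j < m)%N -> (j.+1 < i)%N || (i.+1 < j)%N ->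
         t i * t j = t j * t i) /\
      (forall j, (1 <= j < m)%N -> t j * t j = (q - q^-1) *: t j + 1) /\
      (forall j k, (1 <= j <= m)%N -> (1 <= k <= m)%N ->
         v j * v k + v k * v j = (if j == k then 2%:R else 0)) /\
      (forall j, (1 <= j < m)%N -> t j * v j = v j.+1 * t j) /\
      (forall j, (1 <= j < m)%N ->
         t j * v j.+1 = v j * t j - (q - q^-1) *: (v j - v j.+1)) /\
      (forall j l, (1 <= j < m)%N -> (1 <= l <= m)%N -> l != j -> l != j.+1 ->
         t j * v l = v l * t j).
End HC.

(* Main.v *)
Require Import Defs.
From HB Require Import structures.
From mathcomp Require Import all_boot all_order all_algebra.
From mathcomp Require Import reals complex.
From mathcomp Require Import zify.
Import GRing.Theory Num.Theory.
Local Open Scope ring_scope.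

Section Gen.
Variables (K : pzRingType) (A : algType K).

Lemma spanned_add (P : A -> Prop) x y : spanned P x -> spanned P y -> spanned P (x + y).
Proof.
elim=> [|c x0 y0 Px _ IH] Hy; first by rewrite add0r.
by rewrite -addrA; apply: spanned_comb => //; apply: IH.
Qed.

Lemma spanned_scale (P : A -> Prop) c x : spanned P x -> spanned P (c *: x).
Proof.
elim=> [|d x0 y0 Px _ IH]; first by rewrite scaler0; apply: spanned0.
by rewrite scalerDr scalerA; apply: spanned_comb.
Qed.

Lemma spanned_gen (P : A -> Prop) x : P x -> spanned P x.
Proof. by move=> Px; rewrite -[x]addr0 -[x]scale1r; apply: spanned_comb => //; apply: spanned0. Qed.

Lemma spanned_opp (P : A -> Prop) x : spanned P x -> spanned P (- x).
Proof. by move=> H; rewrite -scaleN1r; apply: spanned_scale. Qed.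

Lemma spanned_map (P Q : A -> Prop) (f : A -> A) :
  (forall c x y, f (c *: x + y) = c *: f x + f y) -> f 0 = 0 ->
  (forall x, P x -> spanned Q (f x)) -> forall x, spanned P x -> spanned Q (f x).
Proof.
move=> fl f0 fP x; elim=> [|c x0 y0 Px _ IH]; first by rewrite f0; apply: spanned0.
by rewrite fl; apply: spanned_add => //; apply: spanned_scale; apply: fP.
Qed.

Lemma gen_alg_mono (S S' : A -> Prop) : (forall x, S x -> S' x) ->
  forall x, gen_alg S x -> gen_alg S' x.
Proof.
move=> H x; elim=> {x}.
- by move=> x /H; apply: gen_alg_gen.
- exact: gen_alg_one.
- by move=> x y _ ? _ ?; apply: gen_alg_add.
- by move=> c x _ ?; apply: gen_alg_scale.
- by move=> x y _ ? _ ?; apply: gen_alg_mul.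
Qed.

Lemma closure (S P : A -> Prop) : spanned P 1 ->
  (forall g y, S g -> P y -> spanned P (y * g)) ->
  forall x, gen_alg S x -> spanned P x.
Proof.
move=> P1 HS.
suff H : forall x, gen_alg S x -> forall y, spanned P y -> spanned P (y * x).
  by move=> x /H Hx; rewrite -[x]mul1r; apply: Hx.
move=> x; elim=> {x} [g Sg||x y _ IHx _ IHy|c x _ IH|x y _ IHx _ IHy] z Pz.
- apply: (spanned_map P P (fun y => y * g)) => //.
  + by move=> c x0 y0; rewrite mulrDl -scalerAl.
  + by rewrite mul0r.
  + by move=> w Pw; apply: HS.
- by rewrite mulr1.
- by rewrite mulrDr; apply: spanned_add; auto.
- by rewrite -scalerAr; apply: spanned_scale; apply: IH.
- by rewrite mulrA; apply: IHy; apply: IHx.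
Qed.
End Gen.
Arguments spanned_add {K A P x y}.
Arguments spanned_scale {K A P} c {x}.
Arguments spanned_gen {K A P x}.
Arguments spanned_opp {K A P x}.
Arguments spanned_map {K A} P Q f.
Arguments gen_alg_mono {K A S S'}.
Arguments closure {K A} S P.

Lemma two_nz (R : realType) : (2%:R : Cplx R) != 0.
Proof. change ((2%:R : R[i]%C) != 0). by rewrite pnatr_eq0. Qed.

Section HCP.
Variables (R : realType) (q : Cplx R) (A : algType (Cplx R)) (t v : nat -> A) (N : nat).
Hypothesis rel : HC_relations N q t v.
Local Notation G m := (gen_alg (HC_gens m t v)).
Let cq := q - q^-1.

Definition SP m (X : seq A) := spanned (fun y => exists a b chi,
   [/\ G m a, G m b, chi \in X & y = a * chi * b]).

Lemma rtt j : (1 <= j < N)%N -> t j * t j = cq *: t j + 1.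
Proof. by have [r1 [r2 [r3 [r4 [r5 [r6 r7]]]]]] := rel; apply: r3. Qed.
Lemma rbraid j : (1 <= j)%N -> (j.+1 < N)%N -> t j * t j.+1 * t j = t j.+1 * t j * t j.+1.
Proof. by have [r1 [r2 [r3 [r4 [r5 [r6 r7]]]]]] := rel; apply: r1. Qed.
Lemma rtt_c i j : (1 <= i < N)%N -> (1 <= j < N)%N -> (j.+1 < i)%N || (i.+1 < j)%N ->
  t i * t j = t j * t i.
Proof. by have [r1 [r2 [r3 [r4 [r5 [r6 r7]]]]]] := rel; apply: r2. Qed.
Lemma rtv j : (1 <= j < N)%N -> t j * v j = v j.+1 * t j.
Proof. by have [r1 [r2 [r3 [r4 [r5 [r6 r7]]]]]] := rel; apply: r5. Qed.
Lemma rtv1 j : (1 <= j < N)%N -> t j * v j.+1 = v j * t j - cq *: (v j - v j.+1).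
Proof. by have [r1 [r2 [r3 [r4 [r5 [r6 r7]]]]]] := rel; apply: r6. Qed.
Lemma rtv_c j l : (1 <= j < N)%N -> (1 <= l <= N)%N -> l != j -> l != j.+1 ->
  t j * v l = v l * t j.
Proof. by have [r1 [r2 [r3 [r4 [r5 [r6 r7]]]]]] := rel; apply: r7. Qed.
Lemma rvv j : (1 <= j <= N)%N -> v j * v j = 1.
Proof.
have [r1 [r2 [r3 [r4 [r5 [r6 r7]]]]]] := rel => hj.
have := r4 j j hj hj; rewrite eqxx => h.
have h2 : (2%:R : Cplx R) *: (v j * v j) = 2%:R *: 1 by rewrite !scaler_nat mulr2n h.
have := congr1 (fun x => (2%:R : Cplx R)^-1 *: x) h2.
by rewrite /= !scalerA mulVf ?two_nz // !scale1r.
Qed.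
Lemma rvanti j k : (1 <= j <= N)%N -> (1 <= k <= N)%N -> j != k -> v j * v k = - (v k * v j).
Proof.
have [r1 [r2 [r3 [r4 [r5 [r6 r7]]]]]] := rel => hj hk jk.
have := r4 j k hj hk; rewrite (negPf jk) => /eqP; by rewrite addr_eq0 => /eqP.
Qed.

Lemma G_t m j : (1 <= j < m)%N -> G m (t j).
Proof. by move=> h; apply: gen_alg_gen; left; exists j. Qed.
Lemma G_v m j : (1 <= j <= m)%N -> G m (v j).
Proof. by move=> h; apply: gen_alg_gen; right; exists j. Qed.
Lemma G_mono m m' x : (m <= m')%N -> G m x -> G m' x.
Proof.
move=> le; apply: gen_alg_mono => y [[j hj ->]|[j hj ->]].
- by left; exists j => //; lia.
- by right; exists j => //; lia.
Qed.
Lemma G_opp m x : G m x -> G m (- x).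
Proof. by move=> h; rewrite -scaleN1r; apply: gen_alg_scale. Qed.

Lemma SPl m X a y : G m a -> SP m X y -> SP m X (a * y).
Proof.
move=> Ga; apply: (spanned_map _ _ (fun y => a * y)).
- by move=> c x z; rewrite mulrDr scalerAr.
- by rewrite mulr0.
- move=> z [a' [b [chi [Ga' Gb chiX ->]]]]; apply: spanned_gen.
  by exists (a * a'), b, chi; split => //; [apply: gen_alg_mul | rewrite !mulrA].
Qed.
Lemma SPr m X b y : G m b -> SP m X y -> SP m X (y * b).
Proof.
move=> Gb; apply: (spanned_map _ _ (fun y => y * b)).
- by move=> c x z; rewrite mulrDl scalerAl.
- by rewrite mul0r.
- move=> z [a [b' [chi [Ga Gb' chiX ->]]]]; apply: spanned_gen.
  by exists a, (b' * b), chi; split => //; [apply: gen_alg_mul | rewrite !mulrA].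
Qed.
Lemma SPx m X chi : chi \in X -> SP m X chi.
Proof.
move=> h; apply: spanned_gen; exists 1, 1, chi; split => //; try exact: gen_alg_one.
by rewrite mulr1 mul1r.
Qed.
Lemma SPe m X a chi b : G m a -> G m b -> chi \in X -> SP m X (a * chi * b).
Proof. by move=> Ga Gb h; apply: SPr => //; apply: SPl => //; apply: SPx. Qed.
Lemma SPadd m X x y : SP m X x -> SP m X y -> SP m X (x + y).
Proof. exact: spanned_add. Qed.
Lemma SPopp m X x : SP m X x -> SP m X (- x).
Proof. exact: spanned_opp. Qed.
Lemma SPsub m X x y : SP m X x -> SP m X y -> SP m X (x - y).
Proof. by move=> h1 h2; apply: SPadd => //; apply: SPopp. Qed.
Lemma SPscale m X c x : SP m X x -> SP m X (c *: x).
Proof. exact: spanned_scale. Qed.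

Definition X k := [:: 1; t k.+1; v k.+2; v k.+2 * t k.+1].

Lemma comm_t k c : (k.+1 < N)%N -> G k c -> c * t k.+1 = t k.+1 * c.
Proof.
move=> hk; elim=> {c}.
- move=> g [[j hj ->]|[j hj ->]].
  + by rewrite (rtt_c j k.+1) //; lia.
  + by rewrite (rtv_c k.+1 j) //; lia.
- by rewrite mul1r mulr1.
- by move=> x y _ IHx _ IHy; rewrite mulrDl mulrDr IHx IHy.
- by move=> c x _ IH; rewrite -scalerAl -scalerAr IH.
- by move=> x y _ IHx _ IHy; rewrite -mulrA IHy mulrA IHx mulrA.
Qed.

Lemma comm_v k c : (k.+1 < N)%N -> G k c -> exists c', G k c' /\
   c * v k.+2 = v k.+2 * c' /\ v k.+2 * c = c' * v k.+2.
Proof.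
move=> hk; elim=> {c}.
- move=> g [[j hj ->]|[j hj ->]].
  + exists (t j); split; first exact: G_t.
    by rewrite (rtv_c j k.+2) //; lia.
  + exists (- v j); split; first by apply: G_opp; apply: G_v.
    rewrite mulrN mulNr (rvanti j k.+2) ?(rvanti k.+2 j) ?opprK //; lia.
- by exists 1; split; [exact: gen_alg_one| rewrite mul1r mulr1].
- move=> x y _ [x' [Gx' [ex1 ex2]]] _ [y' [Gy' [ey1 ey2]]].
  exists (x' + y'); split; first exact: gen_alg_add.
  by rewrite mulrDl mulrDr ex1 ey1 mulrDl mulrDr ex2 ey2.
- move=> c x _ [x' [Gx' [ex1 ex2]]]; exists (c *: x'); split; first exact: gen_alg_scale.
  by split; rewrite -scalerAl -scalerAr ?ex1 ?ex2.
- move=> x y _ [x' [Gx' [ex1 ex2]]] _ [y' [Gy' [ey1 ey2]]].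
  exists (x' * y'); split; first exact: gen_alg_mul.
  split; first by rewrite -mulrA ey1 mulrA ex1 mulrA.
  by rewrite mulrA ex2 -mulrA ey2 mulrA.
Qed.

Lemma chi_comm k chi c : (k.+1 < N)%N -> chi \in X k -> G k c ->
  exists c', G k c' /\ chi * c = c' * chi.
Proof.
move=> hk; rewrite !inE => /or4P [] /eqP -> Gc.
- by exists c; rewrite mul1r mulr1.
- by exists c; rewrite comm_t.
- by have [c' [Gc' [_ e]]] := comm_v _ _ hk Gc; exists c'.
- have [c' [Gc' [_ e]]] := comm_v _ _ hk Gc; exists c'; split => //.
  by rewrite -mulrA -comm_t // mulrA e mulrA.
Qed.

Lemma g_comm k g d : (k.+1 < N)%N -> g \in [:: t k.+1; v k.+2] -> G k d ->
  exists d', G k d' /\ d * g = g * d'.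
Proof.
move=> hk; rewrite !inE => /orP [] /eqP -> Gd.
- by exists d; rewrite comm_t.
- by have [d' [Gd' [e _]]] := comm_v _ _ hk Gd; exists d'.
Qed.

Lemma step k (L : seq A) : (k.+1 < N)%N -> (forall b, G k.+1 b -> SP k L b) ->
 (forall chi chi' g, chi \in X k -> chi' \in L -> g \in [:: t k.+1; v k.+2] ->
     SP k.+1 (X k) (chi * chi' * g)) ->
 forall x, G k.+2 x -> SP k.+1 (X k) x.
Proof.
move=> hk hL hc.
have key : forall chi b g, chi \in X k -> g \in [:: t k.+1; v k.+2] -> G k.+1 b ->
    SP k.+1 (X k) (chi * b * g).
  move=> chi b g hchi hg /hL; apply: (spanned_map _ _ (fun b => chi * b * g)).
  - by move=> c x y; rewrite mulrDr mulrDl -scalerAr -scalerAl.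
  - by rewrite mulr0 mul0r.
  - move=> y [c [d [chi' [Gc Gd hchi' ->]]]].
    have [c' [Gc' ec]] := chi_comm _ _ _ hk hchi Gc.
    have [d' [Gd' ed]] := g_comm _ _ _ hk hg Gd.
    have -> : chi * (c * chi' * d) * g = c' * (chi * chi' * g) * d'.
      by rewrite !mulrA ec -(mulrA _ d g) ed !mulrA.
    apply: SPr; first exact: G_mono Gd'.
    apply: SPl; first exact: G_mono Gc'.
    exact: hc.
apply: closure.
- by apply: SPx; rewrite inE eqxx.
- move=> g y hg [a [b [chi [Ga Gb hchi ->]]]].
  case: hg => [[j hj ->]|[j hj ->]].
  + case: (ltnP j k.+1) => hj'.
    * rewrite -mulrA; apply: SPe => //; apply: gen_alg_mul => //; apply: G_t; lia.
    * have -> : j = k.+1 by lia.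
      have -> : a * chi * b * t k.+1 = a * (chi * b * t k.+1) by rewrite !mulrA.
      by apply: SPl => //; apply: key => //; rewrite inE eqxx.
  + case: (ltnP j k.+2) => hj'.
    * rewrite -mulrA; apply: SPe => //; apply: gen_alg_mul => //; apply: G_v; lia.
    * have -> : j = k.+2 by lia.
      have -> : a * chi * b * v k.+2 = a * (chi * b * v k.+2) by rewrite !mulrA.
      by apply: SPl => //; apply: key => //; rewrite !inE eqxx orbT.
Qed.

Section Comp.
Variable k : nat.
Hypothesis hk : (k.+1 < N)%N.
Local Notation T := (t k.+1).
Local Notation V := (v k.+2).
Local Notation U := (v k.+1).
Local Notation S := (t k).
Local Notation SPk := (SP k.+1 (X k)).

Lemma TT : T * T = cq *: T + 1. Proof. apply: rtt; lia. Qed.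
Lemma TU : T * U = V * T. Proof. apply: rtv; lia. Qed.
Lemma TV : T * V = U * T - cq *: (U - V). Proof. apply: rtv1; lia. Qed.
Lemma VV : V * V = 1. Proof. apply: rvv; lia. Qed.
Lemma UU : U * U = 1. Proof. apply: rvv; lia. Qed.
Lemma VU : V * U = - (U * V). Proof. apply: rvanti; lia. Qed.

Lemma x1 : 1 \in X k. Proof. by rewrite !inE eqxx. Qed.
Lemma xT : T \in X k. Proof. by rewrite !inE eqxx !orbT. Qed.
Lemma xV : V \in X k. Proof. by rewrite !inE eqxx !orbT. Qed.
Lemma xVT : V * T \in X k. Proof. by rewrite !inE eqxx !orbT. Qed.
Lemma GU : G k.+1 U. Proof. apply: G_v; lia. Qed.

Lemma SPG a : G k.+1 a -> SPk a.
Proof. by move=> h; rewrite -[a]mulr1; apply: SPl => //; apply: SPx; apply: x1. Qed.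
Lemma SPlx a chi : G k.+1 a -> chi \in X k -> SPk (a * chi).
Proof. by move=> h hx; apply: SPl => //; apply: SPx. Qed.

Lemma TTsp : SPk (T * T).
Proof. by rewrite TT; apply: SPadd; [apply: SPscale; apply: SPx; apply: xT | apply: SPx; apply: x1]. Qed.
Lemma TVsp : SPk (T * V).
Proof.
rewrite TV; apply: SPsub; first by apply: SPlx; [apply: GU|apply: xT].
by apply: SPscale; apply: SPsub; [apply: SPG; apply: GU| apply: SPx; apply: xV].
Qed.
Lemma VTTsp : SPk (V * T * T).
Proof.
rewrite -mulrA TT mulrDr mulr1 -scalerAr.
by apply: SPadd; [apply: SPscale; apply: SPx; apply: xVT | apply: SPx; apply: xV].
Qed.
Lemma VTVsp : SPk (V * T * V).
Proof.
have -> : V * T * V = - (U * (V * T)) - cq *: (- (U * V) - 1).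
  by rewrite -mulrA TV mulrBr -scalerAr mulrBr [V * (U * T)]mulrA VU VV mulNr !mulrA.
apply: SPsub; first by apply: SPopp; apply: SPlx; [apply: GU|apply: xVT].
apply: SPscale; apply: SPsub; last by apply: SPx; apply: x1.
by apply: SPopp; apply: SPlx; [apply: GU|apply: xV].
Qed.

Lemma comp1 chi g : chi \in X k -> g \in [:: T; V] -> SPk (chi * 1 * g).
Proof.
rewrite mulr1 !inE => /or4P [] /eqP -> /orP [] /eqP ->.
- by rewrite mul1r; apply: SPx; apply: xT.
- by rewrite mul1r; apply: SPx; apply: xV.
- exact: TTsp.
- exact: TVsp.
- by apply: SPx; apply: xVT.
- by rewrite VV; apply: SPx; apply: x1.
- exact: VTTsp.
- exact: VTVsp.
Qed.

Lemma compU chi g : chi \in X k -> g \in [:: T; V] -> SPk (chi * U * g).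
Proof.
rewrite !inE => /or4P [] /eqP -> /orP [] /eqP ->.
- by rewrite mul1r; apply: SPlx; [apply: GU|apply: xT].
- by rewrite mul1r; apply: SPlx; [apply: GU|apply: xV].
- by rewrite TU; apply: VTTsp.
- by rewrite TU; apply: VTVsp.
- by rewrite VU mulNr -mulrA; apply: SPopp; apply: SPlx; [apply: GU|apply: xVT].
- by rewrite VU mulNr -mulrA VV mulr1; apply: SPopp; apply: SPG; apply: GU.
- by rewrite -(mulrA V) TU mulrA VV mul1r; apply: TTsp.
- by rewrite -(mulrA V) TU mulrA VV mul1r; apply: TVsp.
Qed.


Section CompS.
Hypothesis k1 : (1 <= k)%N.
Lemma VS : V * S = S * V. Proof. by rewrite (rtv_c k k.+2) //; lia. Qed.
Lemma STS : S * T * S = T * S * T. Proof. apply: rbraid; lia. Qed.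
Lemma GS : G k.+1 S. Proof. apply: G_t; lia. Qed.

Lemma TSTsp : SPk (T * S * T).
Proof. by rewrite -STS; apply: SPe; [apply: GS|apply: GS|apply: xT]. Qed.
Lemma TSVsp : SPk (T * S * V).
Proof. by rewrite -mulrA -VS mulrA; apply: SPr; [apply: GS|apply: TVsp]. Qed.
Lemma VSTsp : SPk (V * S * T).
Proof. by rewrite VS -mulrA; apply: SPlx; [apply: GS|apply: xVT]. Qed.
Lemma VSVsp : SPk (V * S * V).
Proof. by rewrite VS -mulrA VV mulr1; apply: SPG; apply: GS. Qed.
Lemma VTSTsp : SPk (V * T * S * T).
Proof.
have -> : V * T * S * T = V * (T * S * T) by rewrite !mulrA.
rewrite -STS !mulrA VS -(mulrA S V T).
by apply: SPe; [apply: GS|apply: GS|apply: xVT].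
Qed.
Lemma VTSVsp : SPk (V * T * S * V).
Proof. by rewrite -mulrA -VS mulrA; apply: SPr; [apply: GS|apply: VTVsp]. Qed.

Lemma compS chi g : chi \in X k -> g \in [:: T; V] -> SPk (chi * S * g).
Proof.
rewrite !inE => /or4P [] /eqP -> /orP [] /eqP ->.
- by rewrite mul1r; apply: SPlx; [apply: GS|apply: xT].
- by rewrite mul1r; apply: SPlx; [apply: GS|apply: xV].
- exact: TSTsp.
- exact: TSVsp.
- exact: VSTsp.
- exact: VSVsp.
- exact: VTSTsp.
- exact: VTSVsp.
Qed.

Lemma compUS chi g : chi \in X k -> g \in [:: T; V] -> SPk (chi * (U * S) * g).
Proof.
have GUS : G k.+1 (U * S) by apply: gen_alg_mul; [apply: GU|apply: GS].
rewrite !inE => /or4P [] /eqP -> /orP [] /eqP ->.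
- by rewrite mul1r; apply: SPlx; [apply: GUS|apply: xT].
- by rewrite mul1r; apply: SPlx; [apply: GUS|apply: xV].
- by rewrite mulrA TU; apply: VTSTsp.
- by rewrite mulrA TU; apply: VTSVsp.
- rewrite mulrA VU !mulNr; apply: SPopp.
  have -> : U * V * S * T = U * (V * S * T) by rewrite !mulrA.
  by apply: SPl; [apply: GU|apply: VSTsp].
- rewrite mulrA VU !mulNr; apply: SPopp.
  have -> : U * V * S * V = U * (V * S * V) by rewrite !mulrA.
  by apply: SPl; [apply: GU|apply: VSVsp].
- rewrite !mulrA -(mulrA V T U) TU (mulrA V V T) VV mul1r; exact: TSTsp.
- rewrite !mulrA -(mulrA V T U) TU (mulrA V V T) VV mul1r; exact: TSVsp.
Qed.
End CompS.

Section Alpha.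
Variable alpha : A -> A.
Hypothesis aD : {morph alpha : x y / x + y}.
Hypothesis aZ : forall (c : Cplx R) x, alpha (c *: x) = c *: alpha x.
Hypothesis aM : {morph alpha : x y / x * y}.
Hypothesis a1 : alpha 1 = 1.
Hypothesis aT : forall j, alpha (t j) = t j.
Hypothesis av : forall j, alpha (v j) = - v j.

Lemma aN x : alpha (- x) = - alpha x.
Proof. by rewrite -scaleN1r aZ scaleN1r. Qed.
Lemma a0 : alpha 0 = 0.
Proof. by have := aZ 0 0; rewrite !scale0r. Qed.
Lemma aG m x : G m x -> G m (alpha x).
Proof.
elim=> {x}.
- move=> g [[j hj ->]|[j hj ->]]; first by rewrite aT; apply: G_t.
  by rewrite av; apply: G_opp; apply: G_v.
- by rewrite a1; apply: gen_alg_one.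
- by move=> x y _ ? _ ?; rewrite aD; apply: gen_alg_add.
- by move=> c x _ ?; rewrite aZ; apply: gen_alg_scale.
- by move=> x y _ ? _ ?; rewrite aM; apply: gen_alg_mul.
Qed.
Lemma aa m x : G m x -> alpha (alpha x) = x.
Proof.
elim=> {x}.
- by move=> g [[j hj ->]|[j hj ->]]; rewrite ?aT // av aN av opprK.
- by rewrite !a1.
- by move=> x y _ e1 _ e2; rewrite !aD e1 e2.
- by move=> c x _ e; rewrite !aZ e.
- by move=> x y _ e1 _ e2; rewrite !aM e1 e2.
Qed.

Definition hf (x : A) := (2%:R : Cplx R)^-1 *: x.
Lemma half2 (x : A) : hf (x + x) = x.
Proof.
have -> : x + x = (2%:R : Cplx R) *: x by rewrite scaler_nat mulr2n.
by rewrite /hf scalerA mulVf ?two_nz // scale1r.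
Qed.
Definition ev a := hf (a + alpha a).
Definition od a := hf (a - alpha a).
Lemma ev_od a : a = ev a + od a.
Proof. by rewrite /ev /od /hf -scalerDr addrACA subrr addr0 -[LHS]half2. Qed.
Lemma ev_fix m a : G m a -> alpha (ev a) = ev a.
Proof. by move=> h; rewrite /ev /hf aZ aD (aa _ _ h) addrC. Qed.
Lemma od_neg m a : G m a -> alpha (od a) = - od a.
Proof. by move=> h; rewrite /od /hf aZ aD aN (aa _ _ h) -scalerN opprB. Qed.
Lemma G_ev m a : G m a -> G m (ev a).
Proof. by move=> h; apply: gen_alg_scale; apply: gen_alg_add => //; apply: aG. Qed.
Lemma G_od m a : G m a -> G m (od a).
Proof. by move=> h; apply: gen_alg_scale; apply: gen_alg_add => //; apply: G_opp; apply: aG. Qed.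

Definition f z := hf (z + alpha z).
Lemma fD x y : f (x + y) = f x + f y.
Proof. by rewrite /f /hf aD addrACA scalerDr. Qed.

Definition P2 := (fun y => exists a b chi,
                  [/\ G k.+1 a /\ alpha a = a,
                      G k.+1 b /\ alpha b = b,
                      chi \in [:: 1; T; U * V; U * V * T] &
                      y = a * chi * b]).

Lemma fix_sp z : alpha z = z -> spanned P2 z -> spanned P2 (f z).
Proof. by move=> e h; rewrite /f e half2. Qed.
Lemma neg_sp z : alpha z = - z -> spanned P2 (f z).
Proof. by move=> e; rewrite /f e subrr /hf scaler0; apply: spanned0. Qed.
Lemma P2e a chi b : G k.+1 a -> alpha a = a -> G k.+1 b -> alpha b = b ->
  chi \in [:: 1; T; U * V; U * V * T] -> spanned P2 (a * chi * b).
Proof. by move=> *; apply: spanned_gen; exists a, b, chi; split. Qed.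


Ltac sgn ha0 ha1 hb0 hb1 :=
  rewrite !aM ?ha0 ?ha1 ?hb0 ?hb1 ?a1 ?aT ?av;
  rewrite ?mulNr ?mulrN ?opprK ?mulNr ?mulrN ?opprK ?mulNr ?mulrN ?opprK.

Ltac fin ha1 hb1 :=
  first [ done | exact: GU | exact: gen_alg_one | (apply: gen_alg_mul => //; apply: GU)
        | (apply: gen_alg_mul; done)
        | (rewrite aM ?ha1 ?hb1 ?av mulNr mulrN opprK; done)
        | (rewrite !inE eqxx ?orbT; done) ].

Lemma f_elem a chi b : G k.+1 a -> G k.+1 b -> chi \in X k -> spanned P2 (f (a * chi * b)).
Proof.
move=> Ga Gb hchi.
rewrite (ev_od a) (ev_od b).
have ha0 := ev_fix _ _ Ga; have ha1 := od_neg _ _ Ga.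
have hb0 := ev_fix _ _ Gb; have hb1 := od_neg _ _ Gb.
have Ga0 := G_ev _ _ Ga; have Ga1 := G_od _ _ Ga.
have Gb0 := G_ev _ _ Gb; have Gb1 := G_od _ _ Gb.
move: (ev a) (od a) (ev b) (od b) ha0 ha1 hb0 hb1 Ga0 Ga1 Gb0 Gb1 => a0 a1' b0 b1 ha0 ha1 hb0 hb1 Ga0 Ga1 Gb0 Gb1.
rewrite !mulrDl !mulrDr !fD.
move: hchi; rewrite !inE => /or4P [] /eqP ->;
repeat apply: spanned_add;
(first [ apply: neg_sp; sgn ha0 ha1 hb0 hb1; done
       | apply: fix_sp; [sgn ha0 ha1 hb0 hb1; done | idtac ] ]).
- by apply: P2e; fin ha1 hb1.
- have -> : a1' * 1 * b1 = (a1' * b1) * 1 * 1 by rewrite !mulr1.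
  apply: P2e; fin ha1 hb1.
- by apply: P2e; fin ha1 hb1.
- have -> : a1' * T * b1 = (a1' * U) * (U * V * T) * (U * b1).
    by rewrite !mulrA -(mulrA a1' U U) UU mulr1 -(mulrA (a1' * V) T U) TU mulrA
       -(mulrA a1' V V) VV mulr1.
  apply: P2e; fin ha1 hb1.
- have -> : a0 * V * b1 = - (a0 * (U * V) * (U * b1)).
    by rewrite !mulrA -(mulrA (a0 * U) V U) VU mulrN mulNr opprK !mulrA
       -(mulrA a0 U U) UU mulr1.
  apply: spanned_opp; apply: P2e; fin ha1 hb1.
- have -> : a1' * V * b0 = (a1' * U) * (U * V) * b0.
    by rewrite !mulrA -(mulrA a1' U U) UU mulr1.
  apply: P2e; fin ha1 hb1.
- have -> : a0 * (V * T) * b1 = a0 * T * (U * b1).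
    by rewrite !mulrA -(mulrA a0 T U) TU !mulrA.
  apply: P2e; fin ha1 hb1.
- have -> : a1' * (V * T) * b0 = (a1' * U) * (U * V * T) * b0.
    by rewrite !mulrA -(mulrA a1' U U) UU mulr1.
  apply: P2e; fin ha1 hb1.
Qed.
End Alpha.
End Comp.

Lemma G0_comm c y : G 0 c -> c * y = y * c.
Proof.
elim=> {c}.
- by move=> g [[j hj _]|[j hj _]]; lia.
- by rewrite mul1r mulr1.
- by move=> x z _ IHx _ IHz; rewrite mulrDl mulrDr IHx IHz.
- by move=> c x _ IH; rewrite -scalerAl -scalerAr IH.
- by move=> x z _ IHx _ IHz; rewrite -mulrA IHz mulrA IHx mulrA.
Qed.

Lemma base : (1 < N)%N -> forall x, G 1 x -> SP 0 [:: 1; v 1] x.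
Proof.
move=> hN; apply: closure.
- by apply: SPx; rewrite inE eqxx.
- move=> g y [[j hj _]|[j hj ->]]; first lia.
  have -> : j = 1%N by lia.
  move=> [a [b [chi [Ga Gb hchi ->]]]].
  rewrite -mulrA (G0_comm _ _ Gb) mulrA -(mulrA a chi).
  move: hchi; rewrite !inE => /orP [] /eqP ->.
  + by rewrite mul1r; apply: SPe => //; rewrite !inE eqxx orbT.
  + by rewrite rvv; [apply: SPe => //; rewrite inE eqxx | lia].
Qed.

Lemma part1 k : (k.+1 < N)%N -> forall x, G k.+2 x -> SP k.+1 (X k) x.
Proof.
elim: k => [|k IH] hk.
- apply: (step 0 [:: 1; v 1]) => //.
  + exact: base.
  + move=> chi chi' g hchi hchi' hg; move: hchi'; rewrite !inE => /orP [] /eqP ->.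
    * exact: comp1.
    * exact: compU.
- apply: (step k.+1 (X k)) => //.
  + by apply: IH; lia.
  + move=> chi chi' g hchi hchi' hg; move: hchi'; rewrite !inE => /or4P [] /eqP ->.
    * exact: comp1.
    * by apply: compS.
    * exact: compU.
    * by apply: compUS.
Qed.

Lemma part2 k (alpha : A -> A) : (k.+1 < N)%N ->
  {morph alpha : x y / x + y} ->
  (forall (c : Cplx R) x, alpha (c *: x) = c *: alpha x) ->
  {morph alpha : x y / x * y} -> alpha 1 = 1 ->
  (forall j, alpha (t j) = t j) -> (forall j, alpha (v j) = - v j) ->
  forall x, G k.+2 x -> alpha x = x -> spanned (P2 k alpha) x.
Proof.
move=> hk aD aZ aM a1 aT aV x Gx ax.
have h := part1 k hk x Gx.
have -> : x = f alpha x by rewrite /f ax half2.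
apply: (spanned_map _ _ (f alpha)) h.
- move=> c x' y'; rewrite /f /hf aD aZ addrACA -scalerDr scalerDr !scalerA mulrC.
  by rewrite -(scalerDr c) [LHS]scalerDr scalerA.
- by rewrite /f (a0 _ aZ) addr0 /hf scaler0.
- move=> y [a [b [chi [Ga Gb hchi ->]]]].
  by apply: f_elem.
Qed.
End HCP.

Theorem proposition2p15 (R : realType) (q : Cplx R) (n : nat)
    (A : algType (Cplx R)) (t v : nat -> A) :
  q != 0 -> (1 <= n)%N ->
  HC_relations n.+1 q t v ->
  (forall x, gen_alg (HC_gens n.+1 t v) x ->
     spanned (fun y => exists a b chi,
                [/\ gen_alg (HC_gens n t v) a, gen_alg (HC_gens n t v) b,
                    chi \in [:: 1; t n; v n.+1; v n.+1 * t n] &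
                    y = a * chi * b]) x)
  /\
  (forall alpha : A -> A,
     {morph alpha : x y / x + y} ->
     (forall (c : Cplx R) x, alpha (c *: x) = c *: alpha x) ->
     {morph alpha : x y / x * y} -> alpha 1 = 1 ->
     (forall j, alpha (t j) = t j) -> (forall j, alpha (v j) = - v j) ->
     forall x, gen_alg (HC_gens n.+1 t v) x -> alpha x = x ->
       spanned (fun y => exists a b chi,
                  [/\ gen_alg (HC_gens n t v) a /\ alpha a = a,
                      gen_alg (HC_gens n t v) b /\ alpha b = b,
                      chi \in [:: 1; t n; v n * v n.+1; v n * v n.+1 * t n] &
                      y = a * chi * b]) x).
Proof.
move=> qnz; case: n => [//|k] _ rel.
split.
- move=> x Gx; exact: (@part1 R q A t v k.+2 rel k (ltnSn k.+1) x Gx).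
- move=> alpha aD aZ aM a1 aT aV x Gx ax.
  exact: (@part2 R q A t v k.+2 rel k alpha (ltnSn k.+1) aD aZ aM a1 aT aV x Gx ax).
Qed.
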